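(* $\displaystyle\lim_{m\to\infty} csd(\mathbb{Z}_2\times Q_{2^{m+1}})=0.$
   Context: For a finite group $G$, $L_1(G)$ is the set of cyclic subgroups of $G$ and $csd(G)=\frac{1}{|L_1(G)|^2}|\{(H,K)\in L_1(G)^2: HK=KH\}|$. $Q_{2^{m+1}}=\langle x,y\mid x^{2^m}=e,\ y^2=x^{2^{m-1}},\ y^{-1}xy=x^{-1}\rangle$ is the generalized quaternion group of order $2^{m+1}$ ($m\geq 2$). *)

(* Defs.v *)
From HB Require Import structures.
From mathcomp Require Import all_boot all_order all_algebra all_fingroup all_solvable.
Set Implicit Arguments. Unset Strict Implicit. Unset Printing Implicit Defensive.
Import GRing.Theory.
Local Open Scope group_scope.

Definition cyclic_subgroups (gT : finGroupType) : {set {set gT}} :=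
  [set H : {set gT} | group_set H && cyclic H].

Definition csd (gT : finGroupType) : rat :=
  (#|[set HK in setX (cyclic_subgroups gT) (cyclic_subgroups gT)
      | (HK.1 * HK.2 == HK.2 * HK.1)%g]|%:R / (#|cyclic_subgroups gT| ^ 2)%:R)%R.

(* Z_2 x Q_{2^(m+1)}: external direct product; Z_2 is the additive cyclic
   group 'I_2 (= 'Z_2), Q_{2^(m+1)} is mathcomp's generalized quaternion
   group of order 2^(m+1). *)
Definition Z2xQ (m : nat) : finGroupType := ('I_2 * 'Q_(2 ^ m.+1))%type.

(* Main.v *)
Require Import Defs.
From HB Require Import structures.
From mathcomp Require Import all_boot all_order all_algebra all_fingroup all_solvable.
From mathcomp Require Import zify.
Import GRing.Theory Num.Theory.
Set Implicit Arguments. Unset Strict Implicit. Unset Printing Implicit Defensive.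
Local Open Scope group_scope.

Definition GG (gT : finGroupType) : finGroupType := ('I_2 * gT)%type.

Lemma I2sq (e : 'I_2) : e ^+ 2 = 1.
Proof.
have := expg_cardG (G := [set: 'I_2]%G) (in_setT e).
by rewrite cardsT card_ord.
Qed.

Lemma I2X (e : 'I_2) k : odd k -> e ^+ k = e.
Proof. by move=> ok; rewrite -(expg_mod k (I2sq e)) modn2 ok. Qed.

Lemma fstX (gT : finGroupType) (w : GG gT) n : (w ^+ n).1 = w.1 ^+ n.
Proof. by elim: n => [|n IH] //; rewrite !expgS -IH. Qed.

Lemma sndX (gT : finGroupType) (w : GG gT) n : (w ^+ n).2 = w.2 ^+ n.
Proof. by elim: n => [|n IH] //; rewrite !expgS -IH. Qed.

Lemma pairX (gT : finGroupType) (w : GG gT) n : w ^+ n = (w.1 ^+ n, w.2 ^+ n).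
Proof. by rewrite -fstX -sndX -surjective_pairing. Qed.

Lemma cyclic_roots (gT : finGroupType) (X : {group gT}) n :
  cyclic X -> 0 < n -> #|[set u in X | u ^+ n == 1]| <= n.
Proof.
move=> /cyclicP[x defX]; case: n => [//|n'] _.
pose N := #[x].
have N0 : 0 < N := order_gt0 x.
pose K := [set k : 'I_N | N %| k * n'.+1].
have sub : [set u in X | u ^+ n'.+1 == 1] \subset [set x ^+ val k | k in K].
  apply/subsetP=> u; rewrite inE defX => /andP[/cycleP[i ->] /eqP h].
  apply/imsetP; exists (Ordinal (ltn_pmod i N0)); last by rewrite /= expg_mod_order.
  by rewrite inE /= order_dvdn expgM expg_mod_order h.
apply: (leq_trans (subset_leq_card sub)).
apply: leq_trans (leq_imset_card _ _) _.
have -> : n'.+1 = #|'I_n'.+1| by rewrite card_ord.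
apply: (@leq_card_in _ _ (fun k : 'I_N => inord (k * n'.+1 %/ N))).
move=> k1 k2; rewrite !inE => d1 d2 /(congr1 val) /=.
have lt k : k < N -> k * n'.+1 %/ N < n'.+1.
  by move=> kN; rewrite ltn_divLR // mulnC ltn_pmul2l.
rewrite !inordK ?lt // => e; apply: val_inj => /=.
have : (k1 * n'.+1 = k2 * n'.+1)%N by rewrite -(divnK d1) -(divnK d2) e.
by move/eqP; rewrite eqn_pmul2r // => /eqP.
Qed.

Lemma index2_mem (gT : finGroupType) (X : {group gT}) (q q' : gT) :
  (2 * #|X|)%N = #|[set: gT]| -> q \notin X -> q' \notin X -> q^-1 * q' \in X.
Proof.
move=> oQ qX q'X.
have dis : X :&: q *: X = set0.
  apply/setP=> y; rewrite !inE mem_lcoset; apply/negbTE/andP => -[yX].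
  by rewrite groupMr // groupV (negbTE qX).
have eT : X :|: q *: X = [set: gT].
  apply/eqP; rewrite eqEcard subsetT /= cardsU dis cards0 subn0 card_lcoset.
  by rewrite -oQ mul2n addnn.
have : q' \in X :|: q *: X by rewrite eT inE.
by rewrite inE mem_lcoset (negbTE q'X).
Qed.

Lemma core (gT : finGroupType) (c c' : GG gT) k :
  c.1 = c'.1 -> <[c.2]> = <[c'.2]> -> (#[c.2] %| 2 ^ k)%N -> c' \in <[c]>.
Proof.
move=> e1 e2 dk.
have : c'.2 \in <[c.2]> by rewrite e2 cycle_id.
case/cycleP => s es.
case os: (odd s).
  by apply/cycleP; exists s; rewrite pairX I2X // e1 -es -surjective_pairing.
case u1: (c.2 == 1).
  move/eqP: u1 es => u1; rewrite u1 expg1n => es.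
  have -> : c' = c by rewrite [c']surjective_pairing [c]surjective_pairing e1 es u1.
  exact: cycle_id.
exfalso.
have hs : s = (2 * s./2)%N by rewrite mul2n -[in LHS](odd_double_half s) os.
have : c.2 \in <[(c.2 ^+ 2)]>.
  have : c.2 \in <[c'.2]> by rewrite -e2 cycle_id.
  apply/subsetP; rewrite cycle_subG es hs expgM; exact: mem_cycle.
case/cycleP => j ej; rewrite -expgM in ej.
have j0 : (0 < j)%N by case: j ej => // ej; rewrite muln0 expg0 in ej; rewrite ej eqxx in u1.
have e3 : c.2 ^+ (2 * j).-1 = 1.
  apply: (mulgI c.2); rewrite mulg1 -expgS prednK ?muln_gt0 //.
have d1 : (#[c.2] %| (2 * j).-1)%N by rewrite order_dvdn e3.
have cop : coprime (2 * j).-1 (2 ^ k).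
  apply: coprimeXr; rewrite coprimen2.
  have -> : (2 * j).-1 = (2 * (j - 1)).+1 by lia.
  by rewrite /= oddM.
have : (#[c.2] %| gcdn (2 * j).-1 (2 ^ k))%N by rewrite dvdn_gcd d1 dk.
by rewrite (eqP cop) dvdn1 order_eq1 u1.
Qed.

Section Abs.
Variables (gT : finGroupType) (X : {group gT}) (m : nat).
Hypotheses (cX : cyclic X) (oX : #|X| = (2 ^ m)%N) (oQ : #|[set: gT]| = (2 ^ m.+1)%N)
  (h4 : forall q, q \notin X -> q ^+ 4 = 1).

Let hX (q q' : gT) : q \notin X -> q' \notin X -> q^-1 * q' \in X.
Proof. by apply: index2_mem; rewrite oQ oX expnS. Qed.

Let A : {set GG gT} := setX [set: 'I_2] X.
Let B : {set GG gT} := ~: A.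
Let L := cyclic_subgroups (GG gT).
Let NB := [set H in L | H \subset A].
Let TB := L :\: NB.

Let inA w : (w \in A) = (w.2 \in X).
Proof. by case: w => a b; rewrite in_setX in_setT. Qed.

Let inB w : (w \in B) = (w.2 \notin X).
Proof. by rewrite inE inA. Qed.

Let groupA : group_set A.
Proof. exact: (valP (setX_group [set: 'I_2]%G X)). Qed.
Let AG := Group groupA.

Let cardB : #|B| = (2 ^ m.+1)%N.
Proof.
have := cardsC A; rewrite card_prod card_ord cardsX cardsT card_ord.
have -> : #|gT| = #|[set: gT]| by rewrite cardsT.
rewrite oQ oX expnS => h; rewrite /B; lia.
Qed.

Let B4 w : w \in B -> w ^+ 4 = 1.
Proof.
rewrite inB => wX; rewrite pairX h4 //.
by rewrite (_ : 4 = 2 * 2)%N // expgM I2sq.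
Qed.

Let B2 w : w \in B -> w ^+ 2 \in A.
Proof.
rewrite inB inA sndX => wX.
rewrite expgS expg1.
have := hX (q := w.2^-1) (q' := w.2); rewrite invgK.
by apply; rewrite ?groupV.
Qed.

Let cycL (c : GG gT) : <[c]> \in L.
Proof. by rewrite inE (valP <[c]>%G) cycle_cyclic. Qed.

Let memL H : H \in L -> exists c, H = <[c]>.
Proof. by rewrite inE => /andP[_ /cyclicP]. Qed.

Lemma step2 : (#|B| <= 2 * #|TB|)%N.
Proof.
rewrite -sum1_card (partition_big (fun g => <[g]>) (mem TB)) /=; last first.
  move=> g gB; rewrite !inE (valP <[g]>%G) cycle_cyclic cycle_subG /=.
  by move: gB; rewrite inE andbT.
rewrite mulnC -sum_nat_const; apply: leq_sum => H _.
rewrite sum1_card.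
case: (pickP [pred g | (g \in B) && (<[g]> == H)]) => [g0 /= /andP[g0B /eqP eH]|none]; last first.
  by rewrite (eq_card0 none).
apply: leq_trans (_ : #|[set g0; g0 ^+ 3]| <= 2); last by rewrite cards2; case: (_ != _).
apply: subset_leq_card; apply/subsetP => g /= /andP[gB /eqP eg].
have : g \in <[g0]> by rewrite eH -eg cycle_id.
case/cycleP => k Hk; rewrite Hk in gB *.
rewrite -(expg_mod k (B4 g0B)).
have : k %% 4 < 4 by rewrite ltn_mod.
move: gB; rewrite -(expg_mod k (B4 g0B)).
case: (k %% 4) => [|[|[|[|//]]]] //= gB _; rewrite !inE ?eqxx ?orbT //.
- by move: gB; rewrite inE expg0 group1.
- by move: gB; rewrite inE (B2 g0B).
Qed.

Lemma NBcard : (#|NB| <= 2 * m.+1)%N.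
Proof.
pose gen (C : {set GG gT}) := odflt 1 [pick c | <[c]> == C].
have genP C : C \in L -> <[gen C]> = C.
  move/memL => [c ->]; rewrite /gen; case: pickP => [c' /eqP //|/(_ c)].
  by rewrite eqxx.
pose phi (C : {set GG gT}) : 'I_m.+1 * 'I_2 := (inord (logn 2 #[(gen C).2]), (gen C).1).
have ordX u : u \in X -> exists2 a, (a <= m)%N & #[u] = (2 ^ a)%N.
  move=> uX; have := order_dvdG uX; rewrite oX.
  by move/(dvdn_pfactor _ _ (isT : prime 2)) => [a am ea]; exists a.
have -> : (2 * m.+1 = #|{: 'I_m.+1 * 'I_2}|)%N by rewrite card_prod !card_ord mulnC.
apply: (@leq_card_in _ _ phi) => C1 C2 /setIdP[L1 S1] /setIdP[L2 S2] /= [e1 e2].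
have g1A : gen C1 \in A by apply: (subsetP S1); rewrite -{2}(genP _ L1) cycle_id.
have g2A : gen C2 \in A by apply: (subsetP S2); rewrite -{2}(genP _ L2) cycle_id.
rewrite inA in g1A; rewrite inA in g2A.
have [a1 a1m o1] := ordX _ g1A; have [a2 a2m o2] := ordX _ g2A.
rewrite o1 o2 !pfactorK // in e1.
move/(congr1 (@nat_of_ord _)): e1; rewrite !inordK ?ltnS // => ea.
have eo : #[(gen C1).2] = #[(gen C2).2] by rewrite o1 o2 ea.
have ec : <[(gen C1).2]> = <[(gen C2).2]>.
  by apply/eqP; rewrite (eq_subG_cyclic cX) ?cycle_subG // -!orderE eo.
rewrite -(genP _ L1) -[X in _ = X](genP _ L2).
apply/eqP; rewrite eqEsubset !cycle_subG.
apply/andP; split; apply: (core (k := m)) => //.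
all: by rewrite ?o1 ?o2 dvdn_exp2l.
Qed.

Let W := [set w in A | w ^+ 16 == 1].

Lemma Wcard : (#|W| <= 32)%N.
Proof.
have sub : W \subset setX [set: 'I_2] [set u in X | u ^+ 16 == 1].
  apply/subsetP => -[e u]; rewrite !inE /= => /andP[uX /eqP e16].
  rewrite uX /=.
  by have := congr1 snd e16; rewrite sndX /= => ->.
apply: (leq_trans (subset_leq_card sub)).
rewrite cardsX cardsT card_ord.
by rewrite (_ : 32 = 2 * 16)%N // leq_mul2l /= cyclic_roots.
Qed.

Let T := [set gh in setX B B | <[gh.1]> * <[gh.2]> == <[gh.2]> * <[gh.1]>].

Lemma partner (g h : GG gT) : g \in B -> h \in B ->
  <[g]> * <[h]> = <[h]> * <[g]> -> g^-1 * h \in W.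
Proof.
move=> gB hB comm.
rewrite inE inA /=; apply/andP; split.
  by apply: hX; rewrite -inB.
have gs : group_set (<[g]> * <[h]>) by apply/comm_group_setP.
pose HK := Group gs.
have wHK : g^-1 * h \in HK by apply: mem_mulg; rewrite ?groupV cycle_id.
have d1 := order_dvdG wHK.
have d2 : (#|HK| %| #|<[g]>| * #|<[h]>|)%N by rewrite mul_cardG dvdn_mulr.
have d3 : (#|<[g]>| * #|<[h]>| %| 4 * 4)%N.
  by apply: dvdn_mul; rewrite -orderE order_dvdn ?B4.
by rewrite -order_dvdn (dvdn_trans d1 (dvdn_trans d2 d3)).
Qed.

Lemma Tcard : (#|T| <= 32 * #|B|)%N.
Proof.
rewrite -sum1_card (partition_big (fun gh => gh.1) (mem B)) /=; last first.
  by move=> [g h]; rewrite inE in_setX => /andP[/andP[]].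
rewrite mulnC -sum_nat_const; apply: leq_sum => g gB.
rewrite sum1_card.
apply: (@leq_trans #|[set (g, g * w) | w in W]|); last first.
  exact: leq_trans (leq_imset_card _ _) Wcard.
  apply: subset_leq_card; apply/subsetP => -[g' h] /andP[/= ghT /eqP eg].
  subst g'.
  apply/imsetP; exists (g^-1 * h); last by rewrite mulKVg.
  move: ghT; rewrite inE in_setX /= => /andP[/andP[_ hB] /eqP comm].
  exact: partner.
Qed.

Let S := [set HK in setX L L | HK.1 * HK.2 == HK.2 * HK.1].

Lemma Scard : (#|S| <= 2 * #|NB| * #|L| + 32 * #|B|)%N.
Proof.
have sub : S \subset (setX NB L :|: setX L NB) :|: [set (<[gh.1]>, <[gh.2]>) | gh in T].
  apply/subsetP => -[H K]; rewrite inE => /andP[/setXP[HL KL] /eqP comm].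
  case HN: (H \in NB).
    by apply/setUP; left; apply/setUP; left; apply/setXP.
  case KN: (K \in NB).
    by apply/setUP; left; apply/setUP; right; apply/setXP.
  apply/setUP; right; apply/imsetP.
  have [g eg] := memL HL; have [h eh] := memL KL.
  exists (g, h) => /=; last by rewrite eg eh.
  rewrite inE /= -eg -eh comm eqxx andbT; apply/setXP.
  have hh (C : {set GG gT}) c : C \in L -> C = <[c]> -> C \notin NB -> c \in B.
    move=> CL ec; rewrite inE CL /= ec cycle_subG => cA.
    by rewrite inE.
  by split; [apply: (hh H) | apply: (hh K)]; rewrite ?HN ?KN.
apply: (leq_trans (subset_leq_card sub)).
apply: (leq_trans (leq_card_setU _ _)).
apply: leq_add; last exact: leq_trans (leq_imset_card _ _) (Tcard).
apply: (leq_trans (leq_card_setU _ _)).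
by rewrite !cardsX mulnC -mulnA mul2n -addnn leq_add // mulnC.
Qed.

Lemma key : (#|S| * 2 ^ m.+1 <= (8 * m + 136) * #|L| ^ 2)%N /\ (0 < #|L|)%N.
Proof.
have h1 := Scard.
have h2 := step2.
have h3 : (#|TB| <= #|L|)%N by apply: subset_leq_card; apply: subsetDl.
have h4' := NBcard.
have hb := cardB.
have bpos : (0 < 2 ^ m.+1)%N by rewrite expn_gt0.
rewrite -hb.
set b := #|B| in h1 h2 hb bpos *.
set P := #|S| in h1 *.
set l := #|L| in h3 *.
set n := #|NB| in h1 h4' *.
set t := #|TB| in h2 h3.
split; last by lia.
have hb2 : (b <= 2 * l)%N by lia.
have hn : (4 * n <= 8 * m + 8)%N by lia.
have e1 : (P * b <= (2 * n * l + 32 * b) * b)%N := leq_mul h1 (leqnn b).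
apply: (leq_trans e1).
have e2 : (2 * n * l * b <= 2 * n * l * (2 * l))%N := leq_mul (leqnn _) hb2.
have e3 : (32 * b * b <= 32 * (2 * l) * (2 * l))%N := leq_mul (leq_mul (leqnn 32) hb2) hb2.
have e4 : (4 * n * l * l <= (8 * m + 8) * l * l)%N := leq_mul (leq_mul hn (leqnn l)) (leqnn l).
nia.
Qed.

End Abs.


Lemma sq_le_pow m : (4 <= m)%N -> (m * m <= 2 ^ m)%N.
Proof.
elim: m => // m IH h.
have [-> //|ne] := eqVneq m 3.
have h' : (4 <= m)%N by lia.
have := IH h'; rewrite expnS; nia.
Qed.

Lemma Qfacts m : (2 <= m)%N -> exists x : 'Q_(2 ^ m.+1),
  [/\ #|<[x]>| = (2 ^ m)%N, #|[set: 'Q_(2 ^ m.+1)]| = (2 ^ m.+1)%N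
    & forall q, q \notin <[x]> -> q ^+ 4 = 1].
Proof.
move=> m2.
have n2 : (2 < m.+1)%N by [].
have [[x y] gen _] := generators_quaternion (G := [set: 'Q_(2 ^ m.+1)]%G) n2 (isog_refl _).
have [[_ o4 _] _ _ _ _] := quaternion_structure n2 gen (isog_refl _).
case: gen => oG _ ox _.
exists x; split; first by rewrite [#|_|](esym (orderE x)) ox.
  by [].
by move=> q qX; rewrite -(o4 q) ?expg_order // inE qX inE.
Qed.

Import Order.TTheory.

Theorem corollary3p5 :
  forall eps : rat, (0 < eps)%R ->
  exists N : nat, forall m : nat, (N <= m)%N -> (`|csd (Z2xQ m)| < eps)%R.
Proof.
move=> eps e0.
pose k := Num.Def.archi_bound (eps^-1).
have hk : (eps^-1 < k%:R)%R.
  by apply: archi_boundP; apply: ltW; rewrite invr_gt0.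
have k0 : (0 < k)%N.
  by rewrite -(ltr0n rat) (lt_trans _ hk) // invr_gt0.
have ek : (1 < eps * k%:R)%R.
  have h := hk; rewrite -(ltr_pM2l e0) mulfV ?gt_eqF // in h.
exists (144 * k + 5)%N => m hm.
have m2 : (2 <= m)%N by lia.
have [x [ox oQ h4]] := Qfacts m2.
have [hP l0] := key (cycle_cyclic x) ox oQ h4.
have hsq := sq_le_pow (_ : 4 <= m)%N.
have hpow : ((8 * m + 136) * k < 2 ^ m.+1)%N.
  have := hsq ltac:(lia); rewrite expnS; nia.
set P := #|_| in hP.
set l := #|cyclic_subgroups _| in hP l0.
have hPk : (P * k < l ^ 2)%N.
  have l2 : (0 < l ^ 2)%N by rewrite expn_gt0 l0.
  have : (P * k * 2 ^ m.+1 < l ^ 2 * 2 ^ m.+1)%N.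
    rewrite mulnAC; apply: (leq_ltn_trans (leq_mul hP (leqnn k))).
    rewrite mulnAC [X in (_ < X)%N]mulnC ltn_pmul2r //.
  by rewrite ltn_pmul2r // expn_gt0.
have -> : csd (Z2xQ m) = (P%:R / (l ^ 2)%:R)%R by [].
rewrite ger0_norm ?divr_ge0 ?ler0n //.
rewrite ltr_pdivrMr ?ltr0n ?expn_gt0 ?l0 //.
have a1 : (P%:R * k%:R < (l ^ 2)%:R :> rat)%R by rewrite -natrM ltr_nat.
have a2 : ((l ^ 2)%:R < eps * k%:R * (l ^ 2)%:R :> rat)%R.
  by rewrite -[X in (X < _)%R]mul1r ltr_pM2r // ltr0n expn_gt0 l0.
have : (P%:R * k%:R < eps * (l ^ 2)%:R * k%:R :> rat)%R.
  by rewrite (lt_trans a1) // mulrAC.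
by rewrite ltr_pM2r // ltr0n.
Qed.
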